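(* Let $X$ be a metrizable $\sigma$-compact topological space, $Y$ a topological space, and $f\colon X\times Y\to\mathbb R$ a separately continuous function. Suppose $d$ is a metric inducing the topology of $X$ and $\mathcal K$ is a countable family of compact subsets of $X$ with $X=\bigcup_{K\in\mathcal K}K$, and suppose there is $\delta>0$ such that for each $x\in X$ the open ball $B_\delta(x)$ meets only finitely many $K\in\mathcal K$. Then $f$ is the pointwise limit of a sequence of continuous functions $X\times Y\to\mathbb R$ (with $X\times Y$ carrying the product topology). *)

(* Defs.v *)
From Stdlib Require Import Reals List.
Open Scope R_scope.

Definition is_topology {T : Type} (O : (T -> Prop) -> Prop) : Prop :=
  O (fun _ => True) /\
  O (fun _ => False) /\
  (forall U V, O U -> O V -> O (fun x => U x /\ V x)) /\
  (forall C : (T -> Prop) -> Prop, (forall U, C U -> O U) ->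
     O (fun x => exists U, C U /\ U x)).

Definition is_metric {T : Type} (d : T -> T -> R) : Prop :=
  (forall x y, 0 <= d x y) /\
  (forall x y, d x y = 0 <-> x = y) /\
  (forall x y, d x y = d y x) /\
  (forall x y z, d x z <= d x y + d y z).

Definition ball {T : Type} (d : T -> T -> R) (x : T) (r : R) : T -> Prop :=
  fun y => d x y < r.

Definition metric_open {T : Type} (d : T -> T -> R) (U : T -> Prop) : Prop :=
  forall x, U x -> exists e, 0 < e /\ forall y, ball d x e y -> U y.

Definition induces {T : Type} (d : T -> T -> R) (O : (T -> Prop) -> Prop) : Prop :=
  forall U, O U <-> metric_open d U.

Definition R_open : (R -> Prop) -> Prop := metric_open R_dist.

Definition is_compact {T : Type} (O : (T -> Prop) -> Prop) (K : T -> Prop) : Prop :=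
  forall C : (T -> Prop) -> Prop,
    (forall U, C U -> O U) ->
    (forall x, K x -> exists U, C U /\ U x) ->
    exists l : list (T -> Prop),
      (forall U, In U l -> C U) /\ (forall x, K x -> exists U, In U l /\ U x).

Definition sigma_compact {T : Type} (O : (T -> Prop) -> Prop) : Prop :=
  exists K : nat -> (T -> Prop), (forall n, is_compact O (K n)) /\
    forall x, exists n, K n x.

Definition prod_open {A B : Type} (OA : (A -> Prop) -> Prop) (OB : (B -> Prop) -> Prop)
  (W : A * B -> Prop) : Prop :=
  forall p, W p -> exists U V, OA U /\ OB V /\ U (fst p) /\ V (snd p) /\
    forall a b, U a -> V b -> W (a, b).

Definition continuous {A B : Type} (OA : (A -> Prop) -> Prop) (OB : (B -> Prop) -> Prop)
  (g : A -> B) : Prop :=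
  forall V, OB V -> OA (fun a => V (g a)).

Definition separately_continuous {X Y : Type} (OX : (X -> Prop) -> Prop)
  (OY : (Y -> Prop) -> Prop) (f : X * Y -> R) : Prop :=
  (forall y, continuous OX R_open (fun x => f (x, y))) /\
  (forall x, continuous OY R_open (fun y => f (x, y))).

(* Main.v *)
Require Import Defs.
From Stdlib Require Import Reals List Lra Lia.
From Stdlib Require Import IndefiniteDescription.
Open Scope R_scope.

Definition ctR (F : R -> R) (u0 : R) : Prop :=
  forall e, 0 < e -> exists r, 0 < r /\ forall u, Rabs (u - u0) < r -> Rabs (F u - F u0) < e.

Lemma cpt_ct F u0 : continuity_pt F u0 -> ctR F u0.
Proof.
  intros H e He. destruct (H e He) as (r & Hr & H1). exists r; split; auto.
  intros u Hu. destruct (Req_dec u u0) as [->|Hne].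
  - unfold Rminus; rewrite Rplus_opp_r, Rabs_R0; auto.
  - apply (H1 u). split; [split; [exact I| auto]|]. simpl. unfold R_dist. auto.
Qed.

Lemma ct_sq u0 : ctR (fun u => u * u) u0.
Proof.
  apply cpt_ct. apply (continuity_pt_mult id id).
  all: apply derivable_continuous_pt, derivable_pt_id.
Qed.

Lemma ct_inv u0 : u0 <> 0 -> ctR (fun u => / u) u0.
Proof.
  intros H. apply cpt_ct. apply (continuity_pt_inv id).
  apply derivable_continuous_pt, derivable_pt_id. exact H.
Qed.

Lemma ct_scal c u0 : ctR (fun u => c * u) u0.
Proof.
  intros e He. exists (e / (Rabs c + 1)). split.
  - apply Rdiv_lt_0_compat; [lra| pose proof (Rabs_pos c); lra].
  - intros u Hu. replace (c * u - c * u0) with (c * (u - u0)) by ring.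
    rewrite Rabs_mult. pose proof (Rabs_pos c). pose proof (Rabs_pos (u - u0)).
    assert (Rabs (u - u0) * (Rabs c + 1) < e).
    { apply (Rmult_lt_compat_r (Rabs c + 1)) in Hu; [|lra].
      unfold Rdiv in Hu. rewrite Rmult_assoc, Rinv_l in Hu by lra. lra. }
    nra.
Qed.

Definition cont_at {X Y} (OX : (X->Prop)->Prop) (OY : (Y->Prop)->Prop)
  (h : X*Y -> R) (p : X*Y) : Prop :=
  forall e, 0 < e -> exists U V, OX U /\ OY V /\ U (fst p) /\ V (snd p) /\
    forall a b, U a -> V b -> Rabs (h (a,b) - h p) < e.

Lemma cont_ext {X Y} OX OY (h h' : X*Y -> R) p :
  (forall q, h q = h' q) -> cont_at OX OY h' p -> cont_at OX OY h p.
Proof.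
  intros E H e He. destruct (H e He) as (U&V&?&?&?&?&Hb).
  exists U, V; repeat split; auto. intros a b Ha Hb'. rewrite !E; auto.
Qed.

Lemma cont_add {X Y} OX OY (HX: is_topology OX) (HY : is_topology OY)
  (h1 h2 : X*Y -> R) p :
  cont_at OX OY h1 p -> cont_at OX OY h2 p -> cont_at OX OY (fun q => h1 q + h2 q) p.
Proof.
  intros H1 H2 e He.
  destruct (H1 (e/2)) as (U1&V1&HU1&HV1&Hx1&Hy1&Hb1); [lra|].
  destruct (H2 (e/2)) as (U2&V2&HU2&HV2&Hx2&Hy2&Hb2); [lra|].
  destruct HX as (_&_&HXi&_); destruct HY as (_&_&HYi&_).
  exists (fun x => U1 x /\ U2 x), (fun y => V1 y /\ V2 y).
  repeat split; auto.
  intros a b [Ha1 Ha2] [Hb1' Hb2'].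
  specialize (Hb1 a b Ha1 Hb1'). specialize (Hb2 a b Ha2 Hb2').
  replace (h1 (a, b) + h2 (a, b) - (h1 p + h2 p))
    with ((h1 (a,b) - h1 p) + (h2 (a,b) - h2 p)) by ring.
  eapply Rle_lt_trans; [apply Rabs_triang|]. lra.
Qed.

Lemma cont_comp1 {X Y} OX OY (h : X*Y -> R) (F : R -> R) p :
  cont_at OX OY h p -> ctR F (h p) -> cont_at OX OY (fun q => F (h q)) p.
Proof.
  intros H HF e He.
  destruct (HF e He) as (r & Hr & HFr).
  destruct (H r Hr) as (U&V&HU&HV&Hx&Hy&Hb).
  exists U, V; repeat split; auto.
Qed.

Lemma cont_mul {X Y} OX OY (HX: is_topology OX) (HY : is_topology OY)
  (h1 h2 : X*Y -> R) p :
  cont_at OX OY h1 p -> cont_at OX OY h2 p -> cont_at OX OY (fun q => h1 q * h2 q) p.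
Proof.
  intros H1 H2.
  apply cont_ext with (h' := fun q => /4 * ((h1 q + h2 q) * (h1 q + h2 q)
       + (-1) * ((h1 q + (-1) * h2 q) * (h1 q + (-1) * h2 q)))).
  { intros q. field. }
  apply (cont_comp1 _ _ _ (fun u => /4 * u)); [|apply ct_scal].
  apply cont_add; auto.
  - apply (cont_comp1 _ _ _ (fun u => u * u)); [|apply ct_sq]. apply cont_add; auto.
  - apply (cont_comp1 _ _ _ (fun u => (-1) * u)); [|apply ct_scal].
    apply (cont_comp1 _ _ _ (fun u => u * u)); [|apply ct_sq]. apply cont_add; auto.
    apply (cont_comp1 _ _ _ (fun u => (-1) * u)); [|apply ct_scal]. auto.
Qed.

Lemma cont_div {X Y} OX OY (HX: is_topology OX) (HY : is_topology OY)
  (h1 h2 : X*Y -> R) p :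
  cont_at OX OY h1 p -> cont_at OX OY h2 p -> h2 p <> 0 ->
  cont_at OX OY (fun q => h1 q / h2 q) p.
Proof.
  intros H1 H2 Hn. unfold Rdiv. apply cont_mul; auto.
  apply (cont_comp1 _ _ _ (fun u => / u)); auto. apply ct_inv; auto.
Qed.

Lemma cont_const {X Y} OX OY (HX: is_topology OX) (HY : is_topology OY) (v : R) (p : X*Y) :
  cont_at OX OY (fun _ => v) p.
Proof.
  intros e He. exists (fun _ => True), (fun _ => True).
  destruct HX as (HT&_); destruct HY as (HT'&_). repeat split; auto.
  intros. unfold Rminus; rewrite Rplus_opp_r, Rabs_R0; auto.
Qed.

Definition lsum {X} (h : X -> R) (l : list X) : R :=
  fold_right (fun c acc => h c + acc) 0 l.

Lemma cont_lsum {X Y Z} OX OY (HX: is_topology OX) (HY : is_topology OY)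
  (T : Z -> X*Y -> R) (l : list Z) p :
  (forall c, In c l -> cont_at OX OY (T c) p) ->
  cont_at OX OY (fun q => lsum (fun c => T c q) l) p.
Proof.
  induction l as [|c0 l IH]; intros H; simpl.
  - apply cont_const; auto.
  - apply (cont_add _ _ HX HY (T c0) (fun q => lsum (fun c => T c q) l)); auto.
    apply H; simpl; auto. apply IH. intros; apply H; simpl; auto.
Qed.

Lemma lsum_app {X} h (l1 l2 : list X) : lsum h (l1 ++ l2) = lsum h l1 + lsum h l2.
Proof. induction l1; simpl; [ring| rewrite IHl1; ring]. Qed.

Lemma lsum_zero {X} h (l : list X) : (forall c, In c l -> h c = 0) -> lsum h l = 0.
Proof. induction l; simpl; intros H; auto. rewrite H, IHl; auto; ring. Qed.

Lemma lsum_nonneg {X} h (l:list X) : (forall c, In c l -> 0 <= h c) -> 0 <= lsum h l.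
Proof.
  induction l; simpl; intros H; [lra|].
  pose proof (H a (or_introl eq_refl)). assert (0 <= lsum h l) by auto. lra.
Qed.

Lemma lsum_pos {X} h (l:list X) c : (forall c, In c l -> 0 <= h c) -> In c l -> 0 < h c ->
  0 < lsum h l.
Proof.
  induction l as [|c0 l IH]; simpl; intros H Hin Hc; [contradiction|].
  assert (0 <= h c0) by auto. assert (0 <= lsum h l) by (apply lsum_nonneg; auto).
  destruct Hin as [<-|Hin]; [lra|]. assert (0 < lsum h l) by (apply IH; auto). lra.
Qed.

Lemma lsum_lin {X} (w a : X -> R) v (l : list X) :
  lsum (fun c => w c * (a c - v)) l = lsum (fun c => w c * a c) l - v * lsum w l.
Proof. induction l; simpl; [ring| rewrite IHl; ring]. Qed.

Lemma lsum_weighted {X} (w a : X -> R) (eta : R) (l : list X) :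
  (forall c, In c l -> 0 <= w c) -> (forall c, In c l -> 0 < w c -> Rabs (a c) <= eta) ->
  Rabs (lsum (fun c => w c * a c) l) <= eta * lsum w l.
Proof.
  induction l as [|c0 l IH]; simpl; intros Hw Ha.
  - rewrite Rabs_R0; lra.
  - eapply Rle_trans; [apply Rabs_triang|].
    assert (H1: Rabs (w c0 * a c0) <= eta * w c0).
    { rewrite Rabs_mult, (Rabs_right (w c0)) by (apply Rle_ge; auto).
      destruct (Rle_lt_or_eq_dec 0 (w c0) (Hw c0 (or_introl eq_refl))) as [Hp|He].
      - rewrite Rmult_comm. apply Rmult_le_compat_r; [lra| auto].
      - rewrite <- He. rewrite Rmult_0_l, Rmult_0_r; lra. }
    assert (Rabs (lsum (fun c => w c * a c) l) <= eta * lsum w l) by auto.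
    lra.
Qed.

Lemma choice_fun {A B} (P : A -> B -> Prop) :
  (forall a, exists b, P a b) -> exists f : A -> B, forall a, P a (f a).
Proof.
  intros H. exists (fun a => proj1_sig (constructive_indefinite_description _ (H a))).
  intros a. exact (proj2_sig (constructive_indefinite_description _ (H a))).
Qed.

Lemma ball_open {X} (d : X -> X -> R) (Hd : is_metric d) x r : metric_open d (ball d x r).
Proof.
  intros y Hy. unfold ball in *. exists (r - d x y). split; [lra|].
  intros z Hz. destruct Hd as (_&_&_&Ht). specialize (Ht x y z). lra.
Qed.

Lemma Rball_open u e : R_open (fun z => R_dist u z < e).
Proof.
  intros y Hy. exists (e - R_dist u y). split; [lra|].
  intros z Hz. unfold ball in Hz. pose proof (R_dist_tri u z y).
  lra.
Qed.

Lemma metric_cont {X} (OX : (X->Prop)->Prop) d (Hind : induces d OX) (phi : X -> R) :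
  continuous OX R_open phi ->
  forall x e, 0 < e -> exists r, 0 < r /\ forall z, d x z < r -> R_dist (phi x) (phi z) < e.
Proof.
  intros Hc x e He.
  assert (Ho := Hc _ (Rball_open (phi x) e)). apply Hind in Ho.
  destruct (Ho x) as (r & Hr & H). { simpl. rewrite R_dist_eq. auto. }
  exists r; split; auto.
Qed.

Lemma cont_fst {X Y} (OX : (X->Prop)->Prop) (OY : (Y->Prop)->Prop) d
  (Hd : is_metric d) (Hind : induces d OX) (HY : is_topology OY) (phi : X -> R) p :
  (forall e, 0 < e -> exists r, 0 < r /\ forall a, d (fst p) a < r -> Rabs (phi a - phi (fst p)) < e) ->
  cont_at OX OY (fun q => phi (fst q)) p.
Proof.
  intros H e He. destruct (H e He) as (r & Hr & H1).
  exists (ball d (fst p) r), (fun _ => True). destruct HY as (HT&_).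
  split; [apply Hind, ball_open, Hd|]. split; [exact HT|]. split.
  { unfold ball. destruct Hd as (_&H0&_). rewrite (proj2 (H0 _ _) eq_refl). auto. }
  split; [exact I|]. intros a b Ha _. apply H1. exact Ha.
Qed.

Lemma cont_snd {X Y} (OX : (X->Prop)->Prop) (OY : (Y->Prop)->Prop)
  (HX : is_topology OX) (psi : Y -> R) p :
  continuous OY R_open psi -> cont_at OX OY (fun q => psi (snd q)) p.
Proof.
  intros Hc e He. exists (fun _ => True), (fun b => R_dist (psi (snd p)) (psi b) < e).
  destruct HX as (HT&_). split; [exact HT|]. split; [apply (Hc _ (Rball_open _ _))|].
  split; [exact I|]. split; [rewrite R_dist_eq; auto|].
  intros a b _ Hb. simpl. unfold R_dist in Hb. rewrite Rabs_minus_sym. exact Hb.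
Qed.

Lemma cont_local {X Y} OX OY (HX : is_topology OX) (HY : is_topology OY)
  (h h' : X*Y -> R) p U0 V0 :
  OX U0 -> OY V0 -> U0 (fst p) -> V0 (snd p) ->
  (forall a b, U0 a -> V0 b -> h (a,b) = h' (a,b)) -> cont_at OX OY h' p -> cont_at OX OY h p.
Proof.
  intros HU HV Hx Hy E H e He. destruct (H e He) as (U&V&HU1&HV1&Hx1&Hy1&Hb).
  destruct HX as (_&_&HXi&_); destruct HY as (_&_&HYi&_).
  exists (fun x => U0 x /\ U x), (fun y => V0 y /\ V y). repeat split; auto.
  intros a b [] []. rewrite E by auto. destruct p as [x y]. simpl in *.
  rewrite E by auto. auto.
Qed.

Lemma cont_to_continuous {X Y} OX OY (h : X*Y -> R) :
  (forall p, cont_at OX OY h p) -> continuous (prod_open OX OY) R_open h.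
Proof.
  intros H V HV p Hp. destruct (HV _ Hp) as (e & He & Hb).
  destruct (H p e He) as (U&V'&?&?&?&?&Hab). exists U, V'. repeat split; auto.
  intros a b Ha Hb'. apply Hb. unfold ball, R_dist. rewrite Rabs_minus_sym. auto.
Qed.

Lemma Rmax_lip u v : Rabs (Rmax 0 u - Rmax 0 v) <= Rabs (u - v).
Proof.
  unfold Rmax. destruct (Rle_dec 0 u); destruct (Rle_dec 0 v);
  unfold Rabs; repeat destruct Rcase_abs; lra.
Qed.

Lemma centers_of_cover {X} (d : X -> X -> R) (Kk : X -> Prop) (e : R) (l : list (X -> Prop)) :
  (forall U, In U l -> exists c, Kk c /\ U = ball d c e) ->
  exists lc : list X, (forall c, In c lc -> Kk c) /\
     forall x, (exists U, In U l /\ U x) -> exists c, In c lc /\ ball d c e x.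
Proof.
  induction l as [|U0 l IH]; intros H.
  - exists nil. split; [simpl; tauto|]. intros x (U & [] & _).
  - destruct IH as (lc & H1 & H2). { intros; apply H; simpl; auto. }
    destruct (H U0 (or_introl eq_refl)) as (c0 & Hc0 & ->).
    exists (c0 :: lc). split.
    + intros c [<-|]; auto.
    + intros x (U & [<-|Hin] & Hx).
      * exists c0; simpl; auto.
      * destruct (H2 x) as (c & ? & ?); [eauto|]. exists c; simpl; auto.
Qed.

Lemma prefix_lsum {X} (L : nat -> list X) (h : X -> R) M1 M2 :
  (M1 <= M2)%nat -> (forall k c, (M1 <= k)%nat -> In c (L k) -> h c = 0) ->
  lsum h (flat_map L (seq 0 M2)) = lsum h (flat_map L (seq 0 M1)).
Proof.
  intros Hle Hz. induction M2 as [|m IH].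
  - assert (M1 = 0%nat) by lia. subst; auto.
  - destruct (Nat.eq_dec M1 (S m)) as [->|Hne]; auto.
    rewrite seq_S, flat_map_app, lsum_app, IH by lia. simpl.
    rewrite app_nil_r, (lsum_zero h (L m)); [ring|].
    intros c Hc. apply (Hz m); auto; lia.
Qed.

Lemma bounds_lsum {X} (L : nat -> list X) (h : X -> R) M1 M2 :
  (forall k c, (M1 <= k)%nat -> In c (L k) -> h c = 0) ->
  (forall k c, (M2 <= k)%nat -> In c (L k) -> h c = 0) ->
  lsum h (flat_map L (seq 0 M1)) = lsum h (flat_map L (seq 0 M2)).
Proof.
  intros H1 H2. rewrite <- (prefix_lsum L h M1 (Nat.max M1 M2)) by (auto; lia).
  rewrite <- (prefix_lsum L h M2 (Nat.max M1 M2)) by (auto; lia). reflexivity.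
Qed.

Definition psiF {X} (d : X -> X -> R) e c x := Rmax 0 (e - d c x).
Definition PL {X} (L : nat -> list X) M := flat_map L (seq 0 M).
Definition AF {X} (d : X -> X -> R) e L M x := lsum (fun c => psiF d e c x) (PL L M).
Definition BF {X Y} (d : X -> X -> R) e L (f : X * Y -> R) M (q : X * Y) :=
  lsum (fun c => psiF d e c (fst q) * f (c, snd q)) (PL L M).
Definition epsn delta (n : nat) := delta / 2 * / (INR n + 1).

Lemma eps_small delta r : 0 < delta -> 0 < r ->
  exists N, forall n, (N <= n)%nat -> epsn delta n < r.
Proof.
  intros Hd Hr. destruct (archimed_cor1 (2 * r / delta)) as (N & H1 & H2).
  { apply Rdiv_lt_0_compat; lra. }
  exists N. intros n Hn. unfold epsn.
  apply le_INR in Hn. apply lt_INR in H2. simpl in H2.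
  assert (/ (INR n + 1) < / INR N) by (apply Rinv_lt_contravar; nra).
  assert (delta / 2 * / (INR n + 1) < delta / 2 * (2 * r / delta)) by
    (apply Rmult_lt_compat_l; lra).
  replace (delta / 2 * (2 * r / delta)) with r in H0 by (field; lra). lra.
Qed.

Lemma psi_cont {X Y} (OX : (X->Prop)->Prop) (OY : (Y->Prop)->Prop) d
  (Hd : is_metric d) (Hind : induces d OX) (HY : is_topology OY) e c p :
  cont_at OX OY (fun q => psiF d e c (fst q)) p.
Proof.
  apply (cont_fst OX OY d Hd Hind HY (fun a => psiF d e c a)).
  intros e' He'. exists e'. split; auto. intros a Ha. unfold psiF.
  eapply Rle_lt_trans; [apply Rmax_lip|].
  destruct Hd as (_&_&Hs&Ht).
  pose proof (Ht c (fst p) a). pose proof (Ht c a (fst p)). pose proof (Hs a (fst p)).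
  apply Rabs_def1; lra.
Qed.

Theorem mainTheorem3 (X Y : Type)
  (OX : (X -> Prop) -> Prop) (OY : (Y -> Prop) -> Prop)
  (HX : is_topology OX) (HY : is_topology OY)
  (Hsig : sigma_compact OX)
  (f : X * Y -> R) (Hf : separately_continuous OX OY f)
  (d : X -> X -> R) (Hd : is_metric d) (Hind : induces d OX)
  (K : nat -> (X -> Prop)) (HKc : forall n, is_compact OX (K n))
  (HKcov : forall x, exists n, K n x)
  (delta : R) (Hdelta : 0 < delta)
  (Hloc : forall x, exists N : nat, forall n, (N <= n)%nat ->
            forall z, ball d x delta z -> ~ K n z) :
  exists g : nat -> X * Y -> R,
    (forall n, continuous (prod_open OX OY) R_open (g n)) /\
    (forall p, Un_cv (fun n => g n p) (f p)).
Proof.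
  destruct (choice_fun (fun x N => forall n, (N <= n)%nat -> forall z, ball d x delta z -> ~ K n z) Hloc) as [Nf HNf].
  pose proof Hd as (Hd0 & Hdz & Hds & Hdt).
  assert (Hdxx : forall x, d x x = 0) by (intro; apply Hdz; auto).
  assert (Heps : forall n, 0 < epsn delta n /\ epsn delta n <= delta/2).
  { intros n. unfold epsn. pose proof (pos_INR n). split.
    - apply Rmult_lt_0_compat; [lra| apply Rinv_0_lt_compat; lra].
    - assert (/(INR n + 1) <= 1). { rewrite <- Rinv_1. apply Rinv_le_contravar; lra. }
      nra. }
  assert (Hcov : forall n k, exists lc : list X, (forall c, In c lc -> K k c) /\
      forall x, K k x -> exists c, In c lc /\ ball d c (epsn delta n) x).
  { intros n k. set (e := epsn delta n).
    destruct (HKc k (fun U => exists c, K k c /\ U = ball d c e)) as (l & Hl1 & Hl2).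
    - intros U (c & _ & ->). apply Hind, ball_open, Hd.
    - intros x Hx. exists (ball d x e). split; [eauto|]. unfold ball. rewrite Hdxx. apply Heps.
    - destruct (centers_of_cover d (K k) e l Hl1) as (lc & H1 & H2).
      exists lc; split; auto. }
  destruct (choice_fun (fun n Ln => forall k, (forall c, In c (Ln k) -> K k c) /\
      forall x, K k x -> exists c, In c (Ln k) /\ ball d c (epsn delta n) x)) as [L HL].
  { intros n. apply (choice_fun (fun k lc => (forall c, In c lc -> K k c) /\
      forall x, K k x -> exists c, In c lc /\ ball d c (epsn delta n) x)). apply Hcov. }
  assert (Hvan : forall n x a M k c,
    (forall k, (M <= k)%nat -> forall z, ball d x delta z -> ~ K k z) ->
    d x a < delta/2 -> (M <= k)%nat -> In c (L n k) -> psiF d (epsn delta n) c a = 0).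
  { intros n x a M k c HM Ha Hk Hc. unfold psiF.
    destruct (Rle_dec (epsn delta n - d c a) 0) as [Hl|Hl].
    - apply Rmax_left; auto.
    - exfalso. apply (HM k Hk c); [|apply (HL n k); auto].
      unfold ball. pose proof (Hdt x a c). pose proof (Hds a c).
      pose proof (Heps n). lra. }
  assert (Hpos : forall n x, 0 < AF d (epsn delta n) (L n) (Nf x) x).
  { intros n x. destruct (HKcov x) as [k Hk].
    assert (Hkl : (k < Nf x)%nat).
    { destruct (Nat.lt_ge_cases k (Nf x)) as [|Hge]; auto. exfalso.
      apply (HNf x k Hge x); auto. unfold ball; cbv beta; rewrite Hdxx; lra. }
    destruct (proj2 (HL n k) x Hk) as (c & Hc & Hb).
    apply (lsum_pos _ _ c).
    - intros; unfold psiF; apply Rmax_l.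
    - apply in_flat_map; exists k; split; auto. apply in_seq; lia.
    - unfold psiF, ball in *. eapply Rlt_le_trans; [|apply Rmax_r]. lra. }
  assert (HA : forall n x0 a, d x0 a < delta / 2 ->
     AF d (epsn delta n) (L n) (Nf a) a = AF d (epsn delta n) (L n) (Nf x0) a).
  { intros n x0 a Ha. unfold AF, PL. apply bounds_lsum.
    - intros k c Hk Hc. apply (Hvan n a a (Nf a) k c (HNf a)); auto. rewrite Hdxx; lra.
    - intros k c Hk Hc. apply (Hvan n x0 a (Nf x0) k c (HNf x0)); auto. }
  assert (HB : forall n x0 a b, d x0 a < delta / 2 ->
     BF d (epsn delta n) (L n) f (Nf a) (a, b) = BF d (epsn delta n) (L n) f (Nf x0) (a, b)).
  { intros n x0 a b Ha. unfold BF, PL. simpl. apply bounds_lsum.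
    - intros k c Hk Hc. rewrite (Hvan n a a (Nf a) k c (HNf a)); auto; [ring|]. rewrite Hdxx; lra.
    - intros k c Hk Hc. rewrite (Hvan n x0 a (Nf x0) k c (HNf x0)); auto; ring. }
  exists (fun n q => BF d (epsn delta n) (L n) f (Nf (fst q)) q /
                     AF d (epsn delta n) (L n) (Nf (fst q)) (fst q)).
  split.
  - intros n. apply cont_to_continuous. intros [x0 y0].
    apply (cont_local OX OY HX HY _ (fun q => BF d (epsn delta n) (L n) f (Nf x0) q /
          AF d (epsn delta n) (L n) (Nf x0) (fst q)) (x0, y0) (ball d x0 (delta/2)) (fun _ => True)).
    + apply Hind, ball_open, Hd.
    + destruct HY; auto.
    + unfold ball; simpl; rewrite Hdxx; lra.
    + exact I.
    + intros a b Ha _. simpl. rewrite (HA n x0 a Ha), (HB n x0 a b Ha); auto.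
    + apply cont_div; auto.
      * unfold BF. apply (cont_lsum OX OY HX HY
          (fun c q => psiF d (epsn delta n) c (fst q) * f (c, snd q))).
        intros c _. apply cont_mul; auto.
        -- apply psi_cont; auto.
        -- apply (cont_snd OX OY HX (fun b => f (c, b))). apply (proj2 Hf).
      * unfold AF. apply (cont_lsum OX OY HX HY (fun c q => psiF d (epsn delta n) c (fst q))).
        intros c _. apply psi_cont; auto.
      * simpl. apply Rgt_not_eq, Hpos.
  - intros [x y] eta Heta.
    destruct (metric_cont OX d Hind (fun z => f (z, y)) (proj1 Hf y) x (eta/2)) as (r & Hr & Hcr).
    { lra. }
    destruct (eps_small delta r Hdelta Hr) as [N HN].
    exists N. intros n Hn. simpl.
    set (A := AF d (epsn delta n) (L n) (Nf x) x).
    set (B := BF d (epsn delta n) (L n) f (Nf x) (x, y)).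
    assert (HApos : 0 < A) by apply Hpos.
    assert (Hw : Rabs (B - f (x, y) * A) <= eta / 2 * A).
    { unfold A, B, AF, BF. simpl.
      rewrite <- (lsum_lin (fun c => psiF d (epsn delta n) c x) (fun c => f (c, y))).
      apply lsum_weighted.
      - intros; unfold psiF; apply Rmax_l.
      - intros c _ Hp. unfold psiF in Hp.
        assert (d c x < epsn delta n).
        { unfold Rmax in Hp. destruct (Rle_dec 0 (epsn delta n - d c x)); lra. }
        specialize (HN n Hn).
        assert (d x c < r) by (rewrite Hds; lra).
        specialize (Hcr c H0). unfold R_dist in Hcr. rewrite Rabs_minus_sym in Hcr. lra. }
    unfold R_dist.
    replace (B / A - f (x, y)) with ((B - f (x, y) * A) * / A) by (field; lra).
    rewrite Rabs_mult, (Rabs_right (/ A)) by (apply Rle_ge, Rlt_le, Rinv_0_lt_compat; lra).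
    assert (Rabs (B - f (x, y) * A) * / A <= eta / 2 * A * / A).
    { apply Rmult_le_compat_r; auto. apply Rlt_le, Rinv_0_lt_compat; lra. }
    replace (eta / 2 * A * / A) with (eta / 2) in H by (field; lra). lra.
Qed.
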